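(* Let $G<\operatorname{Aut}(T)$ be the group generated by the automorphisms $a,b,c$ of the $6$-ary rooted tree $T=\{1,\dots,6\}^*$ defined by $a=\langle\!\langle b^{-1},1,b,c^{-1},1,c\rangle\!\rangle(13)(25)(46)$, $b=\langle\!\langle b,b^{-1},1,c,c^{-1},1\rangle\!\rangle(2356)$, $c=(123)(456)$. Then for every $n\in\mathbb{N}$, $G$ contains a subgroup isomorphic to $\mathbb{Z}^n$.
   Context: $T$ is the tree of finite words over $X=\{1,\dots,6\}$; automorphisms act on the right. The wreath recursion $g=\langle\!\langle g_1,\dots,g_6\rangle\!\rangle\sigma$ means $(xv)^g=x^\sigma v^{g_x}$ for $x\in X$, $v\in X^*$. (This $G$ is $\operatorname{IMG}(f_1)$ for $f_1(z)=\frac{2(z^2-3/4)^3}{z^2(z^2-9/8)^2}-1$.) *)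

(* Defs.v *)
From mathcomp Require Import all_boot all_algebra.
Set Implicit Arguments. Unset Strict Implicit. Unset Printing Implicit Defensive.

Inductive letter := x1 | x2 | x3 | x4 | x5 | x6.

Definition vertex := seq letter.

Inductive gen := ga | gb | gc.

(* Words over the generators and their inverses: (g, false) is g, (g, true) is g^-1.
   A word s1 s2 ... sk denotes the product s1 * s2 * ... * sk (right action:
   first s1 acts, then s2, ...). *)
Definition gword := seq (gen * bool).

Definition inv_word (w : gword) : gword :=
  rev (map (fun s => (s.1, ~~ s.2)) w).

Definition perm_gen (g : gen) (x : letter) : letter :=
  match g, x with
  | ga, x1 => x3 | ga, x3 => x1 | ga, x2 => x5 | ga, x5 => x2
  | ga, x4 => x6 | ga, x6 => x4
  | gb, x2 => x3 | gb, x3 => x5 | gb, x5 => x6 | gb, x6 => x2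
  | gb, x1 => x1 | gb, x4 => x4
  | gc, x1 => x2 | gc, x2 => x3 | gc, x3 => x1
  | gc, x4 => x5 | gc, x5 => x6 | gc, x6 => x4
  end.

Definition perm_gen_inv (g : gen) (x : letter) : letter :=
  match g, x with
  | ga, x1 => x3 | ga, x3 => x1 | ga, x2 => x5 | ga, x5 => x2
  | ga, x4 => x6 | ga, x6 => x4
  | gb, x3 => x2 | gb, x5 => x3 | gb, x6 => x5 | gb, x2 => x6
  | gb, x1 => x1 | gb, x4 => x4
  | gc, x2 => x1 | gc, x3 => x2 | gc, x1 => x3
  | gc, x5 => x4 | gc, x6 => x5 | gc, x4 => x6
  end.

Definition sec_gen (g : gen) (x : letter) : gword :=
  match g, x with
  | ga, x1 => [:: (gb, true)] | ga, x2 => [::] | ga, x3 => [:: (gb, false)]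
  | ga, x4 => [:: (gc, true)] | ga, x5 => [::] | ga, x6 => [:: (gc, false)]
  | gb, x1 => [:: (gb, false)] | gb, x2 => [:: (gb, true)] | gb, x3 => [::]
  | gb, x4 => [:: (gc, false)] | gb, x5 => [:: (gc, true)] | gb, x6 => [::]
  | gc, _ => [::]
  end.

(* One generator (or inverse) acting on a first letter: image letter and section.
   For g^-1: x^(g^-1) = y with y^g = x, and (g^-1)|_x = (g|_y)^-1. *)
Definition step (s : gen * bool) (x : letter) : letter * gword :=
  let (g, inv) := s in
  if inv then let y := perm_gen_inv g x in (y, inv_word (sec_gen g y))
  else (perm_gen g x, sec_gen g x).

(* A word acting on a first letter: x^(gh) = (x^g)^h, (gh)|_x = g|_x h|_(x^g). *)
Fixpoint step_word (w : gword) (x : letter) : letter * gword :=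
  match w with
  | [::] => (x, [::])
  | s :: w' =>
      let (y, s1) := step s x in
      let (z, s2) := step_word w' y in (z, s1 ++ s2)
  end.

Fixpoint act (w : gword) (v : vertex) : vertex :=
  match v with
  | [::] => [::]
  | x :: v' => let (y, s) := step_word w x in y :: act s v'
  end.

Definition in_G (f : vertex -> vertex) : Prop := exists w : gword, act w = f.

(* G contains a subgroup isomorphic to Z^n: there is an injective group
   homomorphism Z^n -> G.  The product g*h in G (right action) is the map
   "first g then h", i.e. h \o g. *)
Definition contains_Zn (n : nat) : Prop :=
  exists phi : 'rV[int]_n -> (vertex -> vertex),
    [/\ forall u, in_G (phi u),
        forall u v, phi (u + v)%R = phi v \o phi u
      & injective phi].

(* Main.v *)
Require Import Defs.
From mathcomp Require Import all_boot all_algebra zify.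
From Stdlib Require Import FunctionalExtensionality.
Set Implicit Arguments. Unset Strict Implicit. Unset Printing Implicit Defensive.

Definition bar (s : gen * bool) : gen * bool := (s.1, ~~ s.2).

Lemma inv_word_cons s w : inv_word (s :: w) = inv_word w ++ [:: bar s].
Proof. by rewrite /inv_word /= rev_cons -cats1. Qed.

Lemma inv_word_cat w1 w2 : inv_word (w1 ++ w2) = inv_word w2 ++ inv_word w1.
Proof. by rewrite /inv_word map_cat rev_cat. Qed.

Lemma inv_wordK w : inv_word (inv_word w) = w.
Proof.
rewrite /inv_word map_rev revK -map_comp.
rewrite -[RHS]map_id; apply: eq_map => -[g b] /=. by rewrite negbK.
Qed.

Lemma step_word_cat w1 w2 x :
  step_word (w1 ++ w2) x =
  let (y, s1) := step_word w1 x in let (z, s2) := step_word w2 y in (z, s1 ++ s2).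
Proof.
elim: w1 x => [|s w1 IH] x /=.
  by case: (step_word w2 x).
case: (step s x) => y s1. rewrite IH.
case: (step_word w1 y) => z s2. case: (step_word w2 z) => u s3.
by rewrite catA.
Qed.

Lemma act_nil v : act [::] v = v.
Proof. by elim: v => //= x v ->. Qed.

Lemma act_cat w1 w2 v : act (w1 ++ w2) v = act w2 (act w1 v).
Proof.
elim: v w1 w2 => [|x v IH] w1 w2 //=.
rewrite step_word_cat.
case: (step_word w1 x) => y s1 /=. case: (step_word w2 y) => z s2.
by rewrite IH.
Qed.

Lemma step_bar s x :
  step (bar s) (step s x).1 = (x, inv_word (step s x).2).
Proof. by case: s => -[] [] ; case: x. Qed.

Lemma step_inv w x :
  step_word (inv_word w) (step_word w x).1 = (x, inv_word (step_word w x).2).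
Proof.
elim: w x => [|s w IH] x //=.
rewrite inv_word_cons step_word_cat.
case E1: (step s x) => [y s1]. 
case E2: (step_word w y) => [z s2] /=.
have := IH y. rewrite E2 /= => ->.
have := step_bar s x. rewrite E1 /= => ->.
by rewrite inv_word_cat cats0.
Qed.

Lemma act_invK w v : act (inv_word w) (act w v) = v.
Proof.
elim: v w => [|x v IH] w //=.
have := step_inv w x.
case E: (step_word w x) => [y s] /= ->.
by rewrite IH.
Qed.

Lemma act_Kinv w v : act w (act (inv_word w) v) = v.
Proof. by rewrite -{1}(inv_wordK w) act_invK. Qed.

Definition gen_eqb (g h : gen) : bool :=
  match g, h with ga, ga | gb, gb | gc, gc => true | _, _ => false end.
Definition letter_eqb (x y : letter) : bool :=
  match x, y with x1,x1|x2,x2|x3,x3|x4,x4|x5,x5|x6,x6 => true | _,_ => false end.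
Lemma gen_eqbP g h : gen_eqb g h -> g = h. Proof. by case: g; case: h. Qed.
Lemma letter_eqbP x y : letter_eqb x y -> x = y. Proof. by case: x; case: y. Qed.

Definition sym_eqb (s t : gen * bool) : bool := gen_eqb s.1 t.1 && (s.2 == t.2).
Fixpoint gword_eqb (u v : gword) : bool :=
  match u, v with
  | [::], [::] => true
  | s :: u', t :: v' => sym_eqb s t && gword_eqb u' v'
  | _, _ => false end.
Lemma gword_eqbP u v : gword_eqb u v -> u = v.
Proof.
elim: u v => [|s u IH] [|t v] //= /andP[/andP[/gen_eqbP e1 /eqP e2] /IH ->].
by case: s t e1 e2 => g b [h c] /= -> ->.
Qed.
Fixpoint memw (u : gword) (S : seq gword) : bool :=
  match S with [::] => false | v :: S' => gword_eqb u v || memw u S' end.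

Definition cancels (s t : gen * bool) : bool := gen_eqb s.1 t.1 && (s.2 != t.2).
Fixpoint red (w : gword) : gword :=
  match w with
  | [::] => [::]
  | s :: w' => match red w' with
               | t :: r => if cancels s t then r else s :: t :: r
               | [::] => [:: s] end end.

Lemma act_cons s w v : act (s :: w) v = act w (act [:: s] v).
Proof. by rewrite -act_cat. Qed.

Lemma act_red w v : act (red w) v = act w v.
Proof.
elim: w v => [|s w IH] v //=.
rewrite act_cons -IH.
case E: (red w) => [|t r].
  by rewrite act_nil.
case C: (cancels s t).
  move: C => /andP[/gen_eqbP e1 e2].
  have Ht : t = bar s.
    move: e1 e2; clear; case: s => g b; case: t => h c /= ->.
    by case: b; case: c.
  rewrite Ht.
  rewrite act_cons.
  have -> : act [:: bar s] (act [:: s] v) = v.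
    by have := act_invK [:: s] v.
  by [].
by rewrite act_cons.
Qed.

Definition ok_word (S : seq gword) (w : gword) : bool :=
  all (fun x => let (y, s) := step_word w x in letter_eqb y x && memw (red s) S)
      [:: x1; x2; x3; x4; x5; x6].
Definition ok_set (S : seq gword) : bool := all (ok_word S) S.

Fixpoint InP (T : Type) (w : T) (S : seq T) : Prop :=
  match S with [::] => False | v :: S' => v = w \/ InP w S' end.

Lemma memwP u S : memw u S -> exists2 v, InP v S & u = v.
Proof.
elim: S => //= v S IH /orP[/gword_eqbP -> | /IH [w Hw ->]].
  by exists v; [left|].
by exists w; [right|].
Qed.

Lemma allIn (T : Type) (p : T -> bool) S w : all p S -> InP w S -> p w.
Proof. by elim: S => //= a S IH /andP[Ha HS] [<-|/IH]; auto. Qed.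

Lemma ok_set_triv S : ok_set S -> forall v w, memw w S -> act w v = v.
Proof.
move=> HS; elim=> [|x v IH] w Hw //=.
have [w' Hin ->] := memwP Hw.
have := allIn HS Hin; rewrite /ok_word => Hx.
have Hin2 : InP x [:: x1; x2; x3; x4; x5; x6] by case: x => /=; tauto.
have := allIn Hx Hin2 => /=.
case: (step_word w' x) => y s /andP[/letter_eqbP -> Hm].
by rewrite -act_red IH.
Qed.

Definition addS (S : seq gword) : seq gword :=
  foldl (fun acc w =>
    foldl (fun acc x => let r := red (step_word w x).2 in
                        if memw r acc then acc else r :: acc) acc
          [:: x1; x2; x3; x4; x5; x6]) S S.
Fixpoint grow (n : nat) (S : seq gword) : seq gword :=
  match n with 0 => S | n'.+1 => grow n' (addS S) end.
Definition trivb (w : gword) : bool :=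
  let S := grow 30 [:: red w] in ok_set S && memw (red w) S.

Lemma trivbP w : trivb w -> forall v, act w v = v.
Proof.
rewrite /trivb => /andP[H1 H2] v.
by rewrite -act_red (ok_set_triv H1).
Qed.

Fixpoint pow (w : gword) (n : nat) : gword :=
  match n with 0 => [::] | n'.+1 => w ++ pow w n' end.

Lemma pow_add w m n : pow w (m + n) = pow w m ++ pow w n.
Proof. by elim: m => //= m ->; rewrite catA. Qed.

Lemma pow_mul w m n : pow w (m * n) = pow (pow w m) n.
Proof. by elim: n => [|n IH]; rewrite ?muln0 //= mulnS pow_add IH. Qed.

Lemma act_pow_ext s t n v : (forall u, act s u = act t u) -> act (pow s n) v = act (pow t n) v.
Proof.
move=> H; elim: n v => //= n IH v. by rewrite !act_cat H IH.
Qed.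

Lemma act_pow_id s n v : (forall u, act s u = u) -> act (pow s n) v = v.
Proof. move=> H; elim: n v => [|n IH] v /=; first by rewrite act_nil. by rewrite act_cat H IH. Qed.

Definition fw (F : vertex -> vertex) (x : letter) (g : vertex -> vertex) :=
  forall u, F (x :: u) = x :: g u.

Lemma fw_ext F x g g' : (forall u, g u = g' u) -> fw F x g -> fw F x g'.
Proof. by move=> H Hf u; rewrite Hf H. Qed.

Lemma fw_step w x : (step_word w x).1 = x -> fw (act w) x (act (step_word w x).2).
Proof. move=> H u /=; by case: (step_word w x) H => y s /= ->. Qed.

Lemma fw_cat w1 w2 x g1 g2 : fw (act w1) x g1 -> fw (act w2) x g2 ->
  fw (act (w1 ++ w2)) x (fun u => g2 (g1 u)).
Proof. by move=> H1 H2 u; rewrite act_cat H1 H2. Qed.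

Lemma fw_pow w s x n : fw (act w) x (act s) -> fw (act (pow w n)) x (act (pow s n)).
Proof.
move=> H; elim: n => [|n IH] u; first by rewrite /= act_nil.
have -> : pow w n.+1 = w ++ pow w n by [].
have -> : pow s n.+1 = s ++ pow s n by [].
by rewrite !act_cat H IH.
Qed.

Lemma fw_inv w s x : fw (act w) x (act s) -> fw (act (inv_word w)) x (act (inv_word s)).
Proof.
move=> H u.
have E : act w (x :: act (inv_word s) u) = x :: u by rewrite H act_Kinv.
by rewrite -E act_invK.
Qed.

Lemma act_inv_ext s t v : (forall u, act s u = act t u) -> act (inv_word s) v = act (inv_word t) v.
Proof.
move=> H. rewrite -{1}(act_Kinv t v) -H. by rewrite act_invK.
Qed.

Lemma act_inv_id s v : (forall u, act s u = u) -> act (inv_word s) v = v.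
Proof. move=> H. by rewrite -{1}(H v) act_invK. Qed.

Definition b_ : gen * bool := (gb, false).
Definition B_ : gen * bool := (gb, true).
Definition c_ : gen * bool := (gc, false).
Definition C_ : gen * bool := (gc, true).
Definition hw : gword := [:: b_; b_; b_; C_].
Definition h2 : gword := pow hw 2.
Definition Sx (x : letter) : gword := (step_word h2 x).2.
Definition hw3 : gword := [:: C_] ++ hw ++ [:: c_].

Lemma h2_fix x : (step_word h2 x).1 = x.
Proof. by case: x; vm_compute. Qed.

Lemma t1 : trivb (Sx x1 ++ inv_word hw). Proof. by vm_compute. Qed.
Lemma t3 : trivb (Sx x3 ++ inv_word hw3). Proof. by vm_compute. Qed.
Lemma t2 : trivb (pow (Sx x2) 9). Proof. by vm_compute. Qed.
Lemma t5 : trivb (pow (Sx x5) 9). Proof. by vm_compute. Qed.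
Lemma t4 : trivb (pow (Sx x4) 24). Proof. by vm_compute. Qed.
Lemma t6 : trivb (pow (Sx x6) 24). Proof. by vm_compute. Qed.

Lemma eq_from_triv s t : trivb (s ++ inv_word t) -> forall u, act s u = act t u.
Proof.
move=> /trivbP H u. have := H u; rewrite act_cat => E.
by rewrite -[in RHS]E act_Kinv.
Qed.

Lemma fw_h2pow x m : fw (act (pow hw (2 * m))) x (act (pow (Sx x) m)).
Proof.
rewrite pow_mul -/h2. apply: fw_pow. rewrite /Sx. apply: fw_step. exact: h2_fix.
Qed.

Lemma HP1 m : fw (act (pow hw (2 * m))) x1 (act (pow hw m)).
Proof.
apply: fw_ext (fw_h2pow x1 m) => u. apply: act_pow_ext. exact: eq_from_triv t1.
Qed.

Lemma HP3 m : fw (act (pow hw (2 * m))) x3 (act (pow hw3 m)).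
Proof.
apply: fw_ext (fw_h2pow x3 m) => u. apply: act_pow_ext. exact: eq_from_triv t3.
Qed.

Lemma pow_triv_mul s k j u : trivb (pow s k) -> act (pow s (k * j)) u = u.
Proof.
move=> /trivbP H. rewrite pow_mul. exact: act_pow_id.
Qed.

Lemma HPtriv j x : x <> x1 -> x <> x3 ->
  fw (act (pow hw (2 * (72 * j)))) x id.
Proof.
move=> n1 n3.
apply: fw_ext (fw_h2pow x (72 * j)) => u.
case: x n1 n3 => // _ _.
- by rewrite (_ : 72 * j = 9 * (8 * j)) ?pow_triv_mul ?t2 // mulnA.
- by rewrite (_ : 72 * j = 24 * (3 * j)) ?pow_triv_mul ?t4 // mulnA.
- by rewrite (_ : 72 * j = 9 * (8 * j)) ?pow_triv_mul ?t5 // mulnA.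
- by rewrite (_ : 72 * j = 24 * (3 * j)) ?pow_triv_mul ?t6 // mulnA.
Qed.

Lemma h72_x2 : fw (act (pow hw (2 * 36))) x2 id.
Proof.
apply: fw_ext (fw_h2pow x2 36) => u.
by rewrite (_ : 36 = 9 * 4) ?pow_triv_mul ?t2.
Qed.

Lemma act_hw3_pow m u : act (pow hw3 m) u = act [:: c_] (act (pow hw m) (act [:: C_] u)).
Proof.
elim: m u => [|m IH] u.
  rewrite /= !act_nil. by have := act_Kinv [:: c_] u.
have -> : pow hw3 m.+1 = hw3 ++ pow hw3 m by [].
have -> : pow hw m.+1 = hw ++ pow hw m by [].
rewrite act_cat IH /hw3 !act_cat.
have -> : act [:: C_] (act [:: c_] (act hw (act [:: C_] u))) = act hw (act [:: C_] u).
  by have := act_invK [:: c_] (act hw (act [:: C_] u)).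
by [].
Qed.

Inductive ylet := yc | yy | yz.
Definition yv (y : ylet) : gword :=
  match y with yc => [:: c_] | yy => [:: b_; c_; B_] | yz => [:: b_; b_] end.
Definition yword := seq (ylet * bool).
Definition yval (u : yword) : gword :=
  flatten (map (fun p => if p.2 then inv_word (yv p.1) else yv p.1) u).
Definition yinv (u : yword) : yword := rev (map (fun p => (p.1, ~~ p.2)) u).
Definition tau (y : ylet) : yword :=
  match y with
  | yc => [:: (yc,false); (yz,true); (yy,false); (yz,true); (yz,true); (yz,true); (yz,true); (yy,false); (yc,false)]
  | yy => [:: (yy,false); (yc,false); (yz,true); (yz,true); (yy,false); (yc,false); (yc,false); (yz,true); (yy,false); (yz,true); (yz,true); (yz,true); (yz,true); (yy,false); (yc,false); (yc,true); (yy,true); (yz,false); (yz,false); (yc,true); (yy,true)]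
  | yz => [:: (yy,false); (yc,false); (yz,true); (yz,true); (yy,false); (yc,false); (yc,true); (yy,true); (yz,false); (yz,false); (yz,false); (yz,false); (yy,true); (yz,false); (yc,true); (yc,true); (yy,true); (yz,false); (yz,false); (yc,true); (yy,true); (yc,true); (yy,true); (yz,false); (yz,false); (yz,false); (yz,false); (yy,true); (yz,false); (yc,true)]
  end.
Definition V0y : yword :=
  [:: (yz,false); (yc,false); (yz,true); (yz,true); (yz,true); (yz,true); (yy,false)].
Definition Lam (u : yword) : yword :=
  flatten (map (fun p => if p.2 then yinv (tau p.1) else tau p.1) u).

Lemma tau_fix1 y : (step_word (yval (tau y)) x1).1 = x1.
Proof. by case: y; vm_compute. Qed.
Lemma tau_fix3 y : (step_word (yval (tau y)) x3).1 = x3.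
Proof. by case: y; vm_compute. Qed.
Lemma tau_t1 y : trivb ((step_word (yval (tau y)) x1).2 ++ inv_word (yv y)).
Proof. by case: y; vm_compute. Qed.
Lemma tau_t3 y : trivb ((step_word (yval (tau y)) x3).2).
Proof. by case: y; vm_compute. Qed.
Lemma V0_fix1 : (step_word (yval V0y) x1).1 = x1. Proof. by vm_compute. Qed.
Lemma V0_fix3 : (step_word (yval V0y) x3).1 = x3. Proof. by vm_compute. Qed.
Lemma V0_t1 : trivb ((step_word (yval V0y) x1).2). Proof. by vm_compute. Qed.
Lemma V0_t3 : trivb ((step_word (yval V0y) x3).2 ++ inv_word [:: c_]). Proof. by vm_compute. Qed.

Lemma yval_cat u v : yval (u ++ v) = yval u ++ yval v.
Proof. by rewrite /yval map_cat flatten_cat. Qed.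

Lemma yval_yinv u : yval (yinv u) = inv_word (yval u).
Proof.
elim: u => [|[y s] u IH] //=.
rewrite /yinv /= rev_cons -cats1 -/(yinv u) yval_cat IH.
rewrite /yval /= cats0 -/(yval u).
rewrite inv_word_cat.
by case: s => //=; rewrite inv_wordK.
Qed.

Lemma Lam_spec u :
  fw (act (yval (Lam u))) x1 (act (yval u)) /\ fw (act (yval (Lam u))) x3 id.
Proof.
elim: u => [|[y s] u [IH1 IH3]].
  by split => w; rewrite /= act_nil.
have -> : Lam ((y, s) :: u) = (if s then yinv (tau y) else tau y) ++ Lam u by [].
have -> : yval ((y, s) :: u) = (if s then inv_word (yv y) else yv y) ++ yval u by [].
rewrite yval_cat.
have F1 : fw (act (yval (tau y))) x1 (act (yv y)).
  apply: fw_ext (fw_step (tau_fix1 y)). exact: eq_from_triv (tau_t1 y).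
have F3 : fw (act (yval (tau y))) x3 id.
  apply: fw_ext (fw_step (tau_fix3 y)). exact: trivbP (tau_t3 y).
have H3 : fw (act (yval (if s then yinv (tau y) else tau y))) x3 id.
  case: s; last exact: F3.
  rewrite yval_yinv.
  have F3' : fw (act (yval (tau y))) x3 (act [::]) by apply: fw_ext F3 => w; rewrite act_nil.
  apply: fw_ext (fw_inv F3') => w. exact: act_nil.
have H1 : fw (act (yval (if s then yinv (tau y) else tau y))) x1
             (act (if s then inv_word (yv y) else yv y)).
  clear H3; case: s; last exact: F1.
  rewrite yval_yinv. exact: fw_inv F1.
split.
  by apply: fw_ext (fw_cat H1 IH1) => w; rewrite act_cat.
by apply: fw_ext (fw_cat H3 IH3) => w.
Qed.

Definition commw (p v : gword) : gword := inv_word p ++ inv_word v ++ p ++ v.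

Lemma act_commw p v u :
  act (commw p v) u = act v (act p (act (inv_word v) (act (inv_word p) u))).
Proof. by rewrite /commw !act_cat. Qed.

Lemma comm_fw p v p' v' x : fw (act p) x (act p') -> fw (act v) x (act v') ->
  fw (act (commw p v)) x (act (commw p' v')).
Proof.
move=> Hp Hv u. rewrite !act_commw.
by rewrite (fw_inv Hp) (fw_inv Hv) Hp Hv.
Qed.

Lemma comm_ext p v v' u : (forall w, act v w = act v' w) ->
  act (commw p v) u = act (commw p v') u.
Proof. move=> H. by rewrite !act_commw H (act_inv_ext _ H). Qed.

Lemma comm_idv p v u : (forall w, act v w = w) -> act (commw p v) u = u.
Proof. move=> H. by rewrite act_commw H act_inv_id // act_Kinv. Qed.

Lemma act_cons_shape w x u : exists y u', act w (x :: u) = y :: u'.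
Proof. rewrite /=; case: (step_word w x) => y s; by exists y, (act s u). Qed.

Lemma comm_other p v x g1 g3 :
  (forall y, y <> x1 -> y <> x3 -> fw (act p) y id) ->
  fw (act v) x1 g1 -> fw (act v) x3 g3 -> x <> x1 -> x <> x3 ->
  fw (act (commw p v)) x id.
Proof.
move=> Hp H1 H3 n1 n3 u.
rewrite act_commw.
have E1 : act (inv_word p) (x :: u) = x :: u.
  by rewrite -{1}(Hp x n1 n3 u) act_invK.
rewrite E1.
have [y [u' Ez]] := act_cons_shape (inv_word v) x u.
have Hv : act v (y :: u') = x :: u by rewrite -Ez act_Kinv.
have ny1 : y <> x1 by move=> e; move: Hv; rewrite e H1 => -[] /esym.
have ny3 : y <> x3 by move=> e; move: Hv; rewrite e H3 => -[] /esym.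
by rewrite Ez (Hp y ny1 ny3) Hv.
Qed.

Definition Pw (k : nat) : gword := pow hw (2 * (72 * 2 ^ k)).
Definition Vw (k : nat) : gword := yval (iter k Lam V0y).
Definition Aw (k : nat) : gword := commw (Pw k) (Vw k).
Definition rhow : gword := commw (pow hw3 72) [:: c_].

Definition loc0 (f : vertex -> vertex) (v : vertex) : vertex :=
  match v with x :: w => match x with x3 => x3 :: f w | _ => v end | [::] => v end.
Definition lift1 (F : vertex -> vertex) (v : vertex) : vertex :=
  match v with x :: w => match x with x1 => x1 :: F w | _ => v end | [::] => v end.
Fixpoint liftk (k : nat) (F : vertex -> vertex) (v : vertex) : vertex :=
  match k with 0 => F v | k'.+1 => lift1 (liftk k' F) v end.

Lemma P_fw1 k : fw (act (Pw k.+1)) x1 (act (Pw k)).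
Proof.
have E : 72 * 2 ^ k.+1 = 2 * (72 * 2 ^ k) by rewrite expnS mulnCA.
rewrite /Pw E. exact: HP1.
Qed.

Lemma P_triv k y : y <> x1 -> y <> x3 -> fw (act (Pw k)) y id.
Proof. exact: HPtriv. Qed.

Lemma V_spec k : fw (act (Vw k.+1)) x1 (act (Vw k)) /\ fw (act (Vw k.+1)) x3 id.
Proof. rewrite /Vw iterS. exact: Lam_spec. Qed.

Lemma V0_1 : fw (act (Vw 0)) x1 id.
Proof. apply: fw_ext (fw_step V0_fix1). exact: trivbP V0_t1. Qed.
Lemma V0_3 : fw (act (Vw 0)) x3 (act [:: c_]).
Proof. apply: fw_ext (fw_step V0_fix3). exact: eq_from_triv V0_t3. Qed.

Lemma act_emp w : act w [::] = [::]. Proof. by []. Qed.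

Lemma A_spec k v : act (Aw k) v = liftk k (loc0 (act rhow)) v.
Proof.
elim: k v => [|k IH] [|x w]; try by rewrite act_emp.
- have H1 := comm_fw (HP1 (72 * 2 ^ 0)) (fw_step V0_fix1).
  have H3 := comm_fw (HP3 (72 * 2 ^ 0)) (fw_step V0_fix3).
  rewrite expn0 muln1 in H3.
  case: x.
  + rewrite /Aw /Pw H1 comm_idv //. exact: trivbP V0_t1.
  + by rewrite (comm_other (P_triv 0) V0_1 V0_3).
  + rewrite /Aw /Pw H3. rewrite [liftk _ _ _]/=. congr (_ :: _).
    rewrite /rhow. exact: comm_ext (eq_from_triv V0_t3).
  + by rewrite (comm_other (P_triv 0) V0_1 V0_3).
  + by rewrite (comm_other (P_triv 0) V0_1 V0_3).
  + by rewrite (comm_other (P_triv 0) V0_1 V0_3).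
- have [V1 V3] := V_spec k.
  case: x.
  + have V1' : fw (act (Vw k.+1)) x1 (act (Vw k)) := V1.
    rewrite /Aw (comm_fw (P_fw1 k) V1') -/(Aw k) IH. by [].
  + by rewrite (comm_other (P_triv k.+1) V1 V3).
  + have H3 : fw (act (Pw k.+1)) x3 (act (pow hw3 (72 * 2 ^ k.+1))) by exact: HP3.
    have V3' : fw (act (Vw k.+1)) x3 (act [::]) by apply: fw_ext V3 => u; rewrite act_nil.
    rewrite /Aw (comm_fw H3 V3') comm_idv //. exact: act_nil.
  + by rewrite (comm_other (P_triv k.+1) V1 V3).
  + by rewrite (comm_other (P_triv k.+1) V1 V3).
  + by rewrite (comm_other (P_triv k.+1) V1 V3).
Qed.

Import GRing.Theory.

Lemma actC3 w : act [:: C_] (x3 :: w) = x2 :: w. Proof. by rewrite /= act_nil. Qed.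
Lemma actC2 w : act [:: C_] (x2 :: w) = x1 :: w. Proof. by rewrite /= act_nil. Qed.
Lemma actc2 w : act [:: c_] (x2 :: w) = x3 :: w. Proof. by rewrite /= act_nil. Qed.
Lemma actc1 w : act [:: c_] (x1 :: w) = x2 :: w. Proof. by rewrite /= act_nil. Qed.

Lemma h72_2 w : act (pow hw 72) (x2 :: w) = x2 :: w.
Proof. have := h72_x2 w. by rewrite (_ : 2 * 36 = 72). Qed.
Lemma h72_1 w : act (pow hw 72) (x1 :: w) = x1 :: act (pow hw 36) w.
Proof. have := HP1 36 w. by rewrite (_ : 2 * 36 = 72). Qed.

Lemma rho_x3 : fw (act rhow) x3 (act (pow hw 36)).
Proof.
move=> w. rewrite /rhow act_commw.
have Y3 : act (pow hw3 72) (x3 :: w) = x3 :: w.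
  by rewrite act_hw3_pow actC3 h72_2 actc2.
have -> : act (inv_word (pow hw3 72)) (x3 :: w) = x3 :: w.
  by rewrite -{1}Y3 act_invK.
have -> : inv_word [:: c_] = [:: C_] by [].
rewrite actC3 act_hw3_pow actC2 h72_1 actc1 actc2. by [].
Qed.

Lemma hw_single m : act (pow hw m) [:: x1] = (if odd m then [:: x3] else [:: x1]) /\
                    act (pow hw m) [:: x3] = (if odd m then [:: x1] else [:: x3]).
Proof.
elim: m => [|m [IH1 IH3]]; first by rewrite !act_nil.
have -> : pow hw m.+1 = hw ++ pow hw m by [].
rewrite !act_cat.
have -> : act hw [:: x1] = [:: x3] by vm_compute.
have -> : act hw [:: x3] = [:: x1] by vm_compute.
rewrite IH1 IH3 /=. by case: (odd m).
Qed.

Lemma h_moves m : 0 < m -> exists w, act (pow hw m) w <> w.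
Proof.
elim/ltn_ind: m => m IH m0.
case Om: (odd m).
  exists [:: x1]. by rewrite (proj1 (hw_single m)) Om.
have Hm : m = 2 * m./2.
  by rewrite -{1}(odd_double_half m) Om add0n -mul2n.
have h0 : 0 < m./2 by move: m0; rewrite {1}Hm; case: (m./2).
have hl : m./2 < m by rewrite {2}Hm; move: h0; set k := m./2; lia.
have [w Hw] := IH _ hl h0.
exists (x1 :: w). rewrite Hm HP1 => -[]. exact: Hw.
Qed.

Lemma rho_moves n : 0 < n -> exists w, act (pow rhow n) w <> w.
Proof.
move=> n0.
have p0 : 0 < 36 * n by rewrite muln_gt0 n0.
have [w Hw] := h_moves p0.
exists (x3 :: w). rewrite (fw_pow n rho_x3) -pow_mul => -[]. exact: Hw.
Qed.

Definition powz (w : gword) (z : int) : gword :=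
  match z with Posz n => pow w n | Negz n => pow (inv_word w) n.+1 end.

Lemma pow_succ_r w n v : act (pow w n.+1) v = act w (act (pow w n) v).
Proof. by rewrite -addn1 pow_add act_cat /= cats0. Qed.

Open Scope ring_scope.

Lemma powz_succ w z v : act (powz w (z + 1)) v = act w (act (powz w z) v).
Proof.
case: z => n.
  rewrite (_ : Posz n + 1 = Posz n.+1); last by lia.
  exact: pow_succ_r.
case: n => [|n].
  rewrite (_ : Negz 0 + 1 = 0); last by lia.
  by rewrite /= cats0 act_Kinv act_nil.
rewrite (_ : Negz n.+1 + 1 = Negz n); last by lia.
by rewrite /powz (pow_succ_r (inv_word w) n.+1) act_Kinv.
Qed.

Lemma powz_pred w z v : act (powz w (z - 1)) v = act (inv_word w) (act (powz w z) v).
Proof.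
have := powz_succ w (z - 1) v. rewrite subrK => ->. by rewrite act_invK.
Qed.

Lemma powz_add w a b v : act (powz w (a + b)) v = act (powz w b) (act (powz w a) v).
Proof.
case: b => n.
  elim: n v => [|n IH] v.
    by rewrite addr0 /= act_nil.
  rewrite (_ : a + Posz n.+1 = a + Posz n + 1); last by lia.
  rewrite powz_succ IH -powz_succ.
  by rewrite (_ : Posz n + 1 = Posz n.+1); last by lia.
elim: n v => [|n IH] v.
  rewrite (_ : a + Negz 0 = a - 1); last by lia.
  by rewrite powz_pred /= cats0.
rewrite (_ : a + Negz n.+1 = a + Negz n - 1); last by lia.
rewrite powz_pred IH -powz_pred.
by rewrite (_ : Negz n - 1 = Negz n.+1); last by lia.
Qed.

Close Scope ring_scope.

Import GRing.Theory.

Lemma loc0_ext f g v : (forall u, f u = g u) -> loc0 f v = loc0 g v.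
Proof. by move=> H; case: v => [|[] w] //=; rewrite H. Qed.
Lemma lift1_ext f g v : (forall u, f u = g u) -> lift1 f v = lift1 g v.
Proof. by move=> H; case: v => [|[] w] //=; rewrite H. Qed.
Lemma liftk_ext k f g v : (forall u, f u = g u) -> liftk k f v = liftk k g v.
Proof. elim: k v => [|k IH] v H /=; first exact: H. apply: lift1_ext => u. exact: IH. Qed.
Lemma loc0_comp f g v : loc0 f (loc0 g v) = loc0 (fun u => f (g u)) v.
Proof. by case: v => [|[] w]. Qed.
Lemma lift1_comp f g v : lift1 f (lift1 g v) = lift1 (fun u => f (g u)) v.
Proof. by case: v => [|[] w]. Qed.
Lemma liftk_comp k f g v : liftk k f (liftk k g v) = liftk k (fun u => f (g u)) v.
Proof.
elim: k v => [|k IH] v //=. rewrite lift1_comp. apply: lift1_ext => u. exact: IH.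
Qed.
Lemma liftk_id k f v : (forall u, f u = u) -> liftk k f v = v.
Proof. elim: k v => [|k IH] v H /=; first exact: H. by case: v => [|[] w] //=; rewrite IH. Qed.
Lemma loc0_id f v : (forall u, f u = u) -> loc0 f v = v.
Proof. by move=> H; case: v => [|[] w] //=; rewrite H. Qed.
Lemma liftk_S k F v : liftk k.+1 F v = liftk k (lift1 F) v.
Proof. elim: k v => [|k IH] v //=. apply: lift1_ext => u. exact: IH. Qed.

Lemma pow_loc k w gw : (forall v, act w v = liftk k (loc0 (act gw)) v) ->
  forall n v, act (pow w n) v = liftk k (loc0 (act (pow gw n))) v.
Proof.
move=> H; elim=> [|n IH] v.
  rewrite act_nil liftk_id // => u. by rewrite loc0_id // => u'; rewrite act_nil.
have -> : pow w n.+1 = w ++ pow w n by [].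
rewrite act_cat IH H liftk_comp. apply: liftk_ext => u.
rewrite loc0_comp. apply: loc0_ext => u'. by rewrite act_cat.
Qed.

Lemma inv_loc k w gw : (forall v, act w v = liftk k (loc0 (act gw)) v) ->
  forall v, act (inv_word w) v = liftk k (loc0 (act (inv_word gw))) v.
Proof.
move=> H v.
set X := liftk k (loc0 (act (inv_word gw))) v.
have E : act w X = v.
  rewrite H /X liftk_comp liftk_id // => u. rewrite loc0_comp loc0_id // => u'.
  exact: act_Kinv.
by rewrite -E act_invK.
Qed.

Definition R (z : int) (v : vertex) : vertex := act (powz rhow z) v.

Lemma powz_loc k z v : act (powz (Aw k) z) v = liftk k (loc0 (R z)) v.
Proof.
rewrite /R; case: z => n; rewrite /powz.
  exact: (pow_loc (fun v => A_spec k v)).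
exact: (pow_loc (inv_loc (fun v => A_spec k v))).
Qed.

Fixpoint Ph (zs : seq int) (v : vertex) : vertex :=
  match zs with
  | [::] => v
  | z :: zs' => match v with
                | x :: w => match x with x3 => x3 :: R z w | x1 => x1 :: Ph zs' w | _ => v end
                | [::] => v end end.

Fixpoint Wd (k : nat) (zs : seq int) : gword :=
  match zs with [::] => [::] | z :: zs' => powz (Aw k) z ++ Wd k.+1 zs' end.

Lemma act_Wd zs k v : act (Wd k zs) v = liftk k (Ph zs) v.
Proof.
elim: zs k v => [|z zs IH] k v /=.
  by rewrite act_nil liftk_id.
rewrite act_cat IH powz_loc liftk_S liftk_comp. apply: liftk_ext => u.
by case: u => [|[] w].
Qed.

Lemma Ph_hom (T : Type) (s : seq T) f g v :
  Ph [seq (f i + g i)%R | i <- s] v = Ph [seq g i | i <- s] (Ph [seq f i | i <- s] v).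
Proof.
elim: s v => [|i s IH] [|[] w] //=.
- by rewrite IH.
- by rewrite /R powz_add.
Qed.

Lemma Ph_inj (T : Type) (s : seq T) f g :
  (forall v, Ph [seq f i | i <- s] v = Ph [seq g i | i <- s] v) ->
  forall i, InP i s -> forall w, R (f i) w = R (g i) w.
Proof.
elim: s => [|j s IH] H i //= [<-|Hi] w.
  by have := H (x3 :: w) => /= -[].
apply: IH Hi w => v. by have := H (x1 :: v) => /= -[].
Qed.

Lemma R0 v : R 0 v = v. Proof. exact: act_nil. Qed.

Lemma R_inj a b : (forall w, R a w = R b w) -> a = b.
Proof.
move=> H.
have Hinv : forall u, R (- b) (R b u) = u.
  by move=> u; rewrite /R -powz_add subrr act_nil.
have Hz : forall w, R (a - b) w = w.
  move=> w. have E : R a w = R b (R (a - b) w).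
    by rewrite /R -powz_add subrK.
  by rewrite -[RHS](Hinv w) -H E Hinv.
apply/eqP; rewrite -subr_eq0; apply/eqP.
move: Hz; case: (a - b)%R => [[|n]|n] Hz //.
  have [w Hw] := rho_moves (ltn0Sn n). by case: Hw; apply: Hz.
have [w Hw] := rho_moves (ltn0Sn n).
case: Hw.
have E := powz_add rhow (Negz n) (Posz n.+1) w.
rewrite (_ : (Negz n + Posz n.+1)%R = 0%R) in E; last first.
  by rewrite NegzE addrC subrr.
rewrite /= act_nil in E.
rewrite [in RHS]E -/(R (Negz n) w) Hz. by [].
Qed.

Lemma InP_mem (T : eqType) (x : T) s : x \in s -> InP x s.
Proof. elim: s => //= y s IH; rewrite inE => /orP[/eqP ->|/IH]; auto. Qed.

Theorem corollary11p7 : forall n : nat, contains_Zn n.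
Proof.
move=> n.
exists (fun u => act (Wd 0 [seq u ord0 i | i <- enum 'I_n])).
split.
- by move=> u; exists (Wd 0 [seq u ord0 i | i <- enum 'I_n]).
- move=> u v. apply: functional_extensionality => x /=.
  rewrite !act_Wd /=.
  have -> : [seq (u + v)%R ord0 i | i <- enum 'I_n] =
            [seq (u ord0 i + v ord0 i)%R | i <- enum 'I_n].
    by apply: eq_map => i; rewrite mxE.
  exact: Ph_hom.
- move=> u v H. apply/rowP => i.
  have Hp : forall x, Ph [seq u ord0 i | i <- enum 'I_n] x = Ph [seq v ord0 i | i <- enum 'I_n] x.
    move=> x. have := congr1 (fun f => f x) H. by rewrite /= !act_Wd.
  apply: R_inj. apply: (Ph_inj Hp). apply: InP_mem. by rewrite mem_enum.
Qed.
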